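(* Let $m,n$ be positive integers and let $(A,\boldsymbol{\gamma})\in\left([0,1)^{m\times n}\times[0,1)^m\right)\setminus\mathbf{Bad}(m,n)$. Then, in the metric space $(\mathcal{C},d)$: (i) $\mathcal{C}(A,\boldsymbol{\gamma})$ is a $G_\delta$ set and is dense in $\mathcal{C}$; (ii) $\mathcal{C}(A,\boldsymbol{\gamma})$ is not an $F_\sigma$ set in $\mathcal{C}$.
   Context: $[0,1)^{m\times n}$ is the set of real $m\times n$ matrices with entries in $[0,1)$. For $\boldsymbol{x}\in\mathbb{R}^n$, $\|\boldsymbol{x}\|=\max_i|x_i|$; for $\boldsymbol{y}\in\mathbb{R}^m$, $\langle\boldsymbol{y}\rangle=\min_{\boldsymbol{p}\in\mathbb{Z}^m}\|\boldsymbol{y}-\boldsymbol{p}\|$. ''Decreasing'' means non-increasing. $\mathcal{C}$ is the set of decreasing $\psi:\mathbb{N}\to[0,\infty)$ with $\sum_{q\ge1}q^{n-1}\psi(q)^m<\infty$, equipped with the metric $d(\psi_1,\psi_2)=\sum_{q\ge1}q^{n-1}|\psi_1(q)^m-\psi_2(q)^m|$. $\mathcal{C}(A,\boldsymbol{\gamma})=\{\psi\in\mathcal{C}:\langle A\boldsymbol{q}-\boldsymbol{\gamma}\rangle<\psi(\|\boldsymbol{q}\|)\text{ for infinitely many }\boldsymbol{q}\in\mathbb{Z}^n\}$. $\mathbf{Bad}(m,n)=\{(A,\boldsymbol{\gamma}):\liminf_{\boldsymbol{q}\in\mathbb{Z}^n,\|\boldsymbol{q}\|\to\infty}\|\boldsymbol{q}\|^n\langle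 A\boldsymbol{q}-\boldsymbol{\gamma}\rangle^m>0\}$. *)

(* Defs.v *)
From Stdlib Require Import Reals Lra Lia ZArith List.
From Coquelicot Require Import Coquelicot.
Import ListNotations.
Open Scope R_scope.

(* Vectors of Z^n are lists of integers of length n; matrices A in R^{m x n}
   and vectors gamma in R^m are given as functions on indices, only the
   entries i < m, j < n being relevant. *)

Definition normZ (q : list Z) : nat :=
  Z.to_nat (fold_right Z.max 0%Z (map Z.abs q)).

Definition flr (y : R) : Z := (up y - 1)%Z.
Definition distZ (y : R) : R := Rmin (y - IZR (flr y)) (IZR (flr y) + 1 - y).

Definition Aq_g (n : nat) (A : nat -> nat -> R) (g : nat -> R) (q : list Z)
  (i : nat) : R :=
  fold_right Rplus 0 (map (fun j => A i j * IZR (nth j q 0%Z)) (seq 0 n)) - g i.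

Definition distZv (m : nat) (y : nat -> R) : R :=
  fold_right Rmax 0 (map (fun i => distZ (y i)) (seq 0 m)).

(* Functions psi : N = {1,2,...} -> [0,oo) are encoded as psi : nat -> R with
   psi 0 = 0 (the value at 0 is a dummy normalisation). *)
Definition Cset (m n : nat) (psi : nat -> R) : Prop :=
  psi 0%nat = 0 /\
  (forall q, (1 <= q)%nat -> 0 <= psi q) /\
  (forall p q, (1 <= p)%nat -> (p <= q)%nat -> psi q <= psi p) /\
  ex_series (fun q => INR q ^ (n - 1) * psi q ^ m).

(* the metric d(psi1,psi2) = sum_{q>=1} q^{n-1} |psi1(q)^m - psi2(q)^m|
   (the q = 0 term vanishes on Cset since psi 0 = 0 and m >= 1) *)
Definition dist_C (m n : nat) (psi1 psi2 : nat -> R) : R :=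
  Series (fun q => INR q ^ (n - 1) * Rabs (psi1 q ^ m - psi2 q ^ m)).

Definition CAg (m n : nat) (A : nat -> nat -> R) (g : nat -> R)
  (psi : nat -> R) : Prop :=
  Cset m n psi /\
  (* infinitely many q in Z^n: not contained in any finite list *)
  forall l : list (list Z), exists q : list Z,
    length q = n /\ ~ In q l /\
    distZv m (Aq_g n A g q) < psi (normZ q).

(* Bad(m,n): liminf_{||q|| -> oo} ||q||^n <Aq - gamma>^m > 0 *)
Definition Bad (m n : nat) (A : nat -> nat -> R) (g : nat -> R) : Prop :=
  exists c, 0 < c /\ exists N : nat, forall q : list Z,
    length q = n -> (N <= normZ q)%nat ->
    c <= INR (normZ q) ^ n * distZv m (Aq_g n A g q) ^ m.

Definition open_C (m n : nat) (U : (nat -> R) -> Prop) : Prop :=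
  (forall psi, U psi -> Cset m n psi) /\
  forall psi, U psi -> exists eps, 0 < eps /\
    forall phi, Cset m n phi -> dist_C m n psi phi < eps -> U phi.

Definition closed_C (m n : nat) (F : (nat -> R) -> Prop) : Prop :=
  (forall psi, F psi -> Cset m n psi) /\
  open_C m n (fun psi => Cset m n psi /\ ~ F psi).

Definition G_delta_C (m n : nat) (S : (nat -> R) -> Prop) : Prop :=
  exists U : nat -> (nat -> R) -> Prop,
    (forall k, open_C m n (U k)) /\ forall psi, S psi <-> forall k, U k psi.

Definition F_sigma_C (m n : nat) (S : (nat -> R) -> Prop) : Prop :=
  exists F : nat -> (nat -> R) -> Prop,
    (forall k, closed_C m n (F k)) /\ forall psi, S psi <-> exists k, F k psi.

Definition dense_C (m n : nat) (S : (nat -> R) -> Prop) : Prop :=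
  forall psi, Cset m n psi -> forall eps, 0 < eps ->
    exists phi, S phi /\ dist_C m n psi phi < eps.

(* Main.v *)
Require Import Defs.
From Stdlib Require Import Reals Lra Lia ZArith List Classical IndefiniteDescription FunctionalExtensionality.
From Coquelicot Require Import Coquelicot.
Import ListNotations.
Open Scope R_scope.
Set Default Proof Using "All".

Lemma sum_f_nonneg (a : nat -> R) N : (forall k, 0 <= a k) -> 0 <= sum_f_R0 a N.
Proof. intros H; induction N; simpl; [apply H| specialize (H (S N)); lra]. Qed.

Lemma term_le_sum (a : nat -> R) k : (forall k, 0 <= a k) -> a k <= sum_f_R0 a k.
Proof. intros H; destruct k; simpl; [lra|]. pose proof (sum_f_nonneg a k H); lra. Qed.

Lemma series_bound (a : nat -> R) (B : R) :
  (forall k, 0 <= a k) -> (forall N, sum_f_R0 a N <= B) ->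
  ex_series a /\ Series a <= B.
Proof.
  intros Hpos HB.
  destruct (growing_cv (fun N => sum_f_R0 a N)) as [l Hl].
  - intro N; simpl; specialize (Hpos (S N)); lra.
  - exists B; intros x [N ->]; apply HB.
  - assert (Hs : is_series a l) by (apply is_series_Reals; exact Hl).
    split; [exists l; exact Hs|].
    rewrite (is_series_unique a l Hs).
    destruct (Rle_or_lt l B) as [h|h]; [exact h|].
    destruct (Hl (l - B)) as [N HN]; [lra|].
    specialize (HN N (Nat.le_refl N)). specialize (HB N).
    unfold Rdist in HN. apply Rabs_def2 in HN. lra.
Qed.

Lemma term_le_series (a : nat -> R) k :
  (forall k, 0 <= a k) -> ex_series a -> a k <= Series a.
Proof.
  intros Hpos Hex.
  pose proof (Series_correct a Hex) as Hs.
  apply is_series_Reals in Hs.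
  pose proof (sum_incr a k (Series a) Hs Hpos).
  pose proof (term_le_sum a k Hpos). lra.
Qed.

Lemma Series_nonneg (a : nat -> R) : (forall k, 0 <= a k) -> ex_series a -> 0 <= Series a.
Proof. intros Hp Hex. pose proof (term_le_series a 0 Hp Hex). specialize (Hp 0%nat). lra. Qed.

Lemma pow_lt_inv x y k : 0 <= x -> 0 <= y -> x ^ k < y ^ k -> x < y.
Proof.
  intros hx hy h. destruct (Rlt_or_le x y) as [l|l]; [exact l|].
  pose proof (pow_incr y x k (conj hy l)). lra.
Qed.

Lemma pow_le_self x k : (1 <= k)%nat -> 0 <= x <= 1 -> x ^ k <= x.
Proof.
  intros hk hx. destruct k; [lia|]. simpl.
  assert (x ^ k <= 1).
  { replace 1 with (1 ^ k) by apply pow1. apply pow_incr; lra. }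
  pose proof (pow_le x k (proj1 hx)). nra.
Qed.

Lemma pow_sum_bound a b k : 0 <= a -> 0 <= b -> (a + b) ^ k <= 2 ^ k * (a ^ k + b ^ k).
Proof.
  intros ha hb.
  destruct (Rle_or_lt a b) as [h|h].
  - apply Rle_trans with ((2 * b) ^ k). apply pow_incr; lra.
    rewrite Rpow_mult_distr. pose proof (pow_le a k ha). pose proof (pow_lt 2 k ltac:(lra)). nra.
  - apply Rle_trans with ((2 * a) ^ k). apply pow_incr; lra.
    rewrite Rpow_mult_distr. pose proof (pow_le b k hb). pose proof (pow_lt 2 k ltac:(lra)). nra.
Qed.

Lemma pow0_pos k : (1 <= k)%nat -> 0 ^ k = 0.
Proof. intros h; destruct k; [lia|]; simpl; ring. Qed.

Lemma distZv_nonneg m y : 0 <= distZv m y.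
Proof.
  unfold distZv. induction (seq 0 m); simpl; [lra|].
  apply Rle_trans with (1 := IHl). apply Rmax_r.
Qed.

Definition rangeZ (R : nat) : list Z :=
  map (fun i => (Z.of_nat i - Z.of_nat R)%Z) (seq 0 (2 * R + 1)).

Fixpoint vecs (n R : nat) : list (list Z) :=
  match n with
  | O => [[]]
  | S n' => flat_map (fun z => map (cons z) (vecs n' R)) (rangeZ R)
  end.

Lemma in_rangeZ z R : (Z.abs z <= Z.of_nat R)%Z -> In z (rangeZ R).
Proof.
  intros h. unfold rangeZ. apply in_map_iff.
  exists (Z.to_nat (z + Z.of_nat R)). split.
  - rewrite Z2Nat.id; lia.
  - apply in_seq. lia.
Qed.

Lemma in_vecs n R q : length q = n -> (forall z, In z q -> (Z.abs z <= Z.of_nat R)%Z) ->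
  In q (vecs n R).
Proof.
  revert q; induction n; intros q hl hz.
  - destruct q; [left; reflexivity| discriminate].
  - destruct q as [|z q]; [discriminate|]. simpl.
    apply in_flat_map. exists z. split.
    + apply in_rangeZ. apply hz. left; reflexivity.
    + apply in_map. apply IHn. simpl in hl; lia. intros w hw; apply hz; right; exact hw.
Qed.

Lemma fold_max_nonneg (l : list Z) : (0 <= fold_right Z.max 0 l)%Z.
Proof. induction l; simpl; lia. Qed.

Lemma normZ_bound q z : In z q -> (Z.abs z <= Z.of_nat (normZ q))%Z.
Proof.
  intros h. unfold normZ. rewrite Z2Nat.id by apply fold_max_nonneg.
  induction q; simpl in *; [contradiction|].
  destruct h as [->|h]; [lia|]. specialize (IHq h). lia.
Qed.

Lemma in_vecs_norm n R q : length q = n -> (normZ q <= R)%nat -> In q (vecs n R).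
Proof.
  intros hl hn. apply in_vecs; auto. intros z hz. pose proof (normZ_bound q z hz). lia.
Qed.

Lemma list_norm_bound (l : list (list Z)) : exists B, forall q, In q l -> (normZ q <= B)%nat.
Proof.
  induction l as [|a l [B HB]]; [exists 0%nat; intros q []|].
  exists (Nat.max (normZ a) B). intros q [->|h]; [lia|]. specialize (HB q h); lia.
Qed.
Fixpoint Jf (r : nat -> nat) (q : nat) : nat :=
  match q with
  | O => O
  | S q' => if Nat.ltb (r (Jf r q')) (S q') then S (Jf r q') else Jf r q'
  end.

Definition th (r : nat -> nat) (c : nat -> R) (q : nat) : R :=
  match q with O => 0 | S _ => c (Jf r q) end.

Definition Rprev (r : nat -> nat) (k : nat) : nat :=
  match k with O => O | S k' => r k' end.

Definition trunc r c k (q : nat) : R := if Nat.leb q (Rprev r k) then th r c q else 0.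

Definition term (m n : nat) (f : nat -> R) (q : nat) : R := INR q ^ (n - 1) * f q ^ m.

Definition hk m n r c k (q : nat) : R :=
  if Nat.leb q (Rprev r k) then 0 else term m n (th r c) q.

Set Default Proof Using "All".
Section Blocks.
Variables (m n : nat) (r : nat -> nat) (c e : nat -> R).
Hypothesis Hm : (1 <= m)%nat.
Hypothesis Hn : (1 <= n)%nat.
Hypothesis Hr : forall j, (r j < r (S j))%nat.
Hypothesis Hr0 : (1 <= r 0)%nat.
Hypothesis Hc : forall j, 0 < c j.
Hypothesis Hcd : forall j, c (S j) <= c j.
Hypothesis He : forall j, 2 * e (S j) <= e j.
Hypothesis HE : forall j, c j ^ m * INR (r j) ^ n <= e j.

Lemma r_mono i j : (i <= j)%nat -> (r i <= r j)%nat.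
Proof. induction 1; [lia|]. pose proof (Hr m0); lia. Qed.

Lemma r_strict i j : (i < j)%nat -> (r i < r j)%nat.
Proof. intros h. pose proof (Hr i). pose proof (r_mono (S i) j h). lia. Qed.

Lemma c_anti i j : (i <= j)%nat -> c j <= c i.
Proof. induction 1; [lra|]. pose proof (Hcd m0); lra. Qed.

Lemma Jf_spec q : (q <= r (Jf r q))%nat /\ forall j, (j < Jf r q)%nat -> (r j < q)%nat.
Proof.
  induction q as [|q [IH1 IH2]]; simpl.
  - split; [lia| intros; lia].
  - destruct (Nat.ltb_spec (r (Jf r q)) (S q)) as [h|h].
    + split. pose proof (Hr (Jf r q)); lia.
      intros j hj. destruct (Nat.eq_dec j (Jf r q)) as [->|hne]; [lia|].
      specialize (IH2 j ltac:(lia)); lia.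
    + split; [lia|]. intros j hj; specialize (IH2 j hj); lia.
Qed.

Lemma Jf_block k q : (Rprev r k < q <= r k)%nat -> Jf r q = k.
Proof.
  intros [h1 h2]. destruct (Jf_spec q) as [s1 s2].
  destruct (Nat.lt_trichotomy (Jf r q) k) as [l|[e0|l]]; auto.
  - destruct k; [lia|]. simpl in h1. pose proof (r_mono (Jf r q) k ltac:(lia)). lia.
  - specialize (s2 k l). lia.
Qed.

Lemma Jf_mono q q' : (q <= q')%nat -> (Jf r q <= Jf r q')%nat.
Proof.
  induction 1; [lia|]. simpl. destruct (Nat.ltb (r (Jf r m0)) (S m0)); lia.
Qed.

Lemma th_at_r k : th r c (r k) = c k.
Proof.
  assert (h : (Rprev r k < r k)%nat).
  { destruct k; simpl; [lia| apply Hr]. }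
  unfold th. destruct (r k) eqn:E; [lia|]. rewrite <- E. rewrite (Jf_block k); auto.
  rewrite E; lia.
Qed.

Lemma th_nonneg q : 0 <= th r c q.
Proof. destruct q; simpl; [lra|]. apply Rlt_le, Hc. Qed.

Lemma th_dec p q : (1 <= p)%nat -> (p <= q)%nat -> th r c q <= th r c p.
Proof.
  intros h1 h2. destruct p; [lia|]. destruct q; [lia|]. unfold th.
  apply c_anti. apply Jf_mono; lia.
Qed.

Lemma e_nonneg j : 0 <= e j.
Proof.
  apply Rle_trans with (2 := HE j). apply Rmult_le_pos; apply pow_le; [apply Rlt_le, Hc| apply pos_INR].
Qed.

Lemma pow_step x k : 0 <= x -> x ^ (S k) + (x + 1) ^ k <= (x + 1) ^ (S k).
Proof.
  intros hx. simpl. pose proof (pow_incr x (x+1) k ltac:(lra)). pose proof (pow_le x k hx). nra.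
Qed.

Lemma hk_nonneg k q : 0 <= hk m n r c k q.
Proof.
  unfold hk, term. destruct (Nat.leb q (Rprev r k)); [lra|].
  apply Rmult_le_pos; apply pow_le; [apply pos_INR| apply th_nonneg].
Qed.

Lemma block_inv k N :
  ((Jf r N < k)%nat -> sum_f_R0 (hk m n r c k) N = 0) /\
  ((k <= Jf r N)%nat -> sum_f_R0 (hk m n r c k) N <=
      2 * e k - 2 * e (Jf r N) + c (Jf r N) ^ m * INR N ^ n).
Proof.
  remember (n - 1)%nat as n0 eqn:Hn0. assert (En : n = S n0) by lia. rewrite En.
  assert (Hsub : (S n0 - 1)%nat = n0) by lia.
  induction N as [|N [IH1 IH2]].
  - simpl. unfold hk. simpl Nat.leb. cbv iota. split; [reflexivity|].
    intros hk0. assert (k = 0%nat) by lia. subst k. simpl. lra.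
  - destruct (Jf_spec N) as [s1 s2].
    assert (HhS : hk m (S n0) r c k (S N) =
       if Nat.leb (S N) (Rprev r k) then 0 else INR (S N) ^ n0 * c (Jf r (S N)) ^ m).
    { unfold hk, term. rewrite Hsub. reflexivity. }
    assert (Hpos : forall j, 0 <= c j ^ m) by (intro j; apply pow_le, Rlt_le, Hc).
    assert (HINR : INR (S N) = INR N + 1) by apply S_INR.
    assert (Hstep := pow_step (INR N) n0 (pos_INR N)).
    simpl sum_f_R0. rewrite HhS. 
    set (J := Jf r N) in *.
    assert (HJ : Jf r (S N) = if Nat.ltb (r J) (S N) then S J else J) by reflexivity.
    destruct (Nat.ltb_spec (r J) (S N)) as [h|h].
    + assert (EN : r J = N) by lia.
      rewrite HJ.
      destruct (Nat.lt_trichotomy (S J) k) as [l|[eq|l]].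
      * assert (Hle : (S N <= Rprev r k)%nat).
        { destruct k as [|k']; [lia|]. simpl. pose proof (Hr J). pose proof (r_mono (S J) k' ltac:(lia)). lia. }
        apply Nat.leb_le in Hle. rewrite Hle. rewrite IH1 by lia. split; [intros; lra| intros; lia].
      * rewrite IH1 by lia. split; [intros; lia|]. intros _. rewrite <- eq.
        assert (Hq : (INR N + 1) ^ n0 <= (INR N + 1) ^ (S n0)).
        { pose proof (pow_le (INR N) (S n0) (pos_INR N)). lra. }
        pose proof (Rmult_le_compat_l _ _ _ (Hpos (S J)) Hq).
        pose proof (pow_le (INR N + 1) (S n0) ltac:(pose proof (pos_INR N); lra)) as Hp2.
        pose proof (Rmult_le_pos _ _ (Hpos (S J)) Hp2).
        destruct (Nat.leb (S N) (Rprev r (S J))); rewrite HINR; nra.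
      * assert (hkJ : (k <= J)%nat) by lia. specialize (IH2 hkJ).
        split; [intros; lia|]. intros _.
        pose proof (HE J) as HEJ. rewrite EN, En in HEJ. pose proof (He J).
        assert (Hq : (INR N + 1) ^ n0 <= (INR N + 1) ^ (S n0)).
        { pose proof (pow_le (INR N) (S n0) (pos_INR N)). lra. }
        pose proof (Rmult_le_compat_l _ _ _ (Hpos (S J)) Hq).
        pose proof (pow_le (INR N + 1) (S n0) ltac:(pose proof (pos_INR N); lra)) as Hp2.
        pose proof (Rmult_le_pos _ _ (Hpos (S J)) Hp2).
        destruct (Nat.leb (S N) (Rprev r k)); rewrite HINR; lra.
    + rewrite HJ.
      destruct (Nat.lt_ge_cases J k) as [l|l].
      * assert (Hle : (S N <= Rprev r k)%nat).
        { destruct k as [|k']; [lia|]. simpl. pose proof (r_mono J k' ltac:(lia)). lia. }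
        apply Nat.leb_le in Hle. rewrite Hle. rewrite IH1 by lia. split; [intros; lra| intros; lia].
      * specialize (IH2 l). split; [intros; lia|]. intros _.
        pose proof (Rmult_le_compat_l _ _ _ (Hpos J) Hstep).
        pose proof (pow_le (INR N + 1) n0 ltac:(pose proof (pos_INR N); lra)) as Hp2.
        pose proof (Rmult_le_pos _ _ (Hpos J) Hp2).
        destruct (Nat.leb (S N) (Rprev r k)); rewrite HINR; lra.
Qed.

Lemma block_sum k N : sum_f_R0 (hk m n r c k) N <= 2 * e k.
Proof.
  destruct (block_inv k N) as [h1 h2].
  destruct (Nat.lt_ge_cases (Jf r N) k) as [l|l].
  - rewrite h1 by exact l. pose proof (e_nonneg k); lra.
  - specialize (h2 l). destruct (Jf_spec N) as [s1 _].
    pose proof (HE (Jf r N)).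
    assert (INR N ^ n <= INR (r (Jf r N)) ^ n) by (apply pow_incr; split; [apply pos_INR| apply le_INR; lia]).
    pose proof (pow_le (c (Jf r N)) m (Rlt_le _ _ (Hc _))). 
    pose proof (e_nonneg (Jf r N)). nra.
Qed.


Lemma term_hk0 q : hk m n r c 0 q = term m n (th r c) q.
Proof.
  unfold hk. destruct q; [|reflexivity]. simpl Nat.leb. cbv iota.
  unfold term. change (th r c 0) with 0. rewrite (pow0_pos m Hm). ring.
Qed.

Lemma th_series : ex_series (term m n (th r c)) /\ Series (term m n (th r c)) <= 2 * e 0.
Proof.
  destruct (series_bound (hk m n r c 0) (2 * e 0) (hk_nonneg 0) (block_sum 0)) as [h1 h2].
  split.
  - eapply ex_series_ext; [|exact h1]. intro q; apply term_hk0.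
  - rewrite <- (Series_ext _ _ term_hk0). exact h2.
Qed.

Lemma Cset_th : Cset m n (th r c).
Proof.
  split; [reflexivity|]. split; [intros; apply th_nonneg|]. split.
  - intros p q h1 h2. apply th_dec; auto.
  - apply th_series.
Qed.

Lemma trunc_le k q : 0 <= trunc r c k q <= th r c q.
Proof.
  unfold trunc. pose proof (th_nonneg q). destruct (Nat.leb q (Rprev r k)); lra.
Qed.

Lemma Cset_trunc k : Cset m n (trunc r c k).
Proof.
  split; [reflexivity|]. split; [intros; apply trunc_le|]. split.
  - intros p q h1 h2. unfold trunc.
    destruct (Nat.leb_spec q (Rprev r k)); destruct (Nat.leb_spec p (Rprev r k)); try lia.
    + apply th_dec; auto.
    + apply th_nonneg.
    + lra.
  - apply (@ex_series_le R_AbsRing R_CompleteNormedModule _ (term m n (th r c))); [|apply th_series].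
    intro q. change (norm (INR q ^ (n - 1) * trunc r c k q ^ m)) with (Rabs (INR q ^ (n - 1) * trunc r c k q ^ m)).
    unfold term. rewrite Rabs_pos_eq.
    + apply Rmult_le_compat_l; [apply pow_le, pos_INR|]. apply pow_incr. apply trunc_le.
    + apply Rmult_le_pos; apply pow_le; [apply pos_INR| apply trunc_le].
Qed.

Lemma dist_trunc_eq k q :
  INR q ^ (n - 1) * Rabs (th r c q ^ m - trunc r c k q ^ m) = hk m n r c k q.
Proof.
  unfold hk, trunc, term. destruct (Nat.leb q (Rprev r k)).
  - rewrite Rminus_diag, Rabs_R0. ring.
  - rewrite pow0_pos by exact Hm. rewrite Rminus_0_r. rewrite Rabs_pos_eq; [reflexivity|].
    apply pow_le, th_nonneg.
Qed.

Lemma dist_trunc k : dist_C m n (th r c) (trunc r c k) <= 2 * e k /\ dist_C m n (trunc r c k) (th r c) <= 2 * e k.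
Proof.
  destruct (series_bound (hk m n r c k) (2 * e k) (hk_nonneg k) (block_sum k)) as [h1 h2].
  unfold dist_C. split.
  - rewrite (Series_ext _ _ (dist_trunc_eq k)). exact h2.
  - rewrite (Series_ext _ (hk m n r c k)); [exact h2|]. intro q. rewrite Rabs_minus_sym. apply dist_trunc_eq.
Qed.

Lemma r_ge k : (S k <= r k)%nat.
Proof. induction k; [exact Hr0|]. pose proof (Hr k). lia. Qed.

Variables (A : nat -> nat -> R) (g : nat -> R).

Lemma trunc_not_CAg k : ~ CAg m n A g (trunc r c k).
Proof.
  intros [_ H]. destruct (H (vecs n (Rprev r k))) as [q [hl [hnin hlt]]].
  destruct (Nat.le_gt_cases (normZ q) (Rprev r k)) as [h|h].
  - apply hnin. apply in_vecs_norm; auto.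
  - unfold trunc in hlt. destruct (Nat.leb_spec (normZ q) (Rprev r k)); [lia|].
    pose proof (distZv_nonneg m (Aq_g n A g q)). lra.
Qed.

Lemma hits_CAg phi : Cset m n phi ->
  (forall k, exists q, length q = n /\ normZ q = r k /\ distZv m (Aq_g n A g q) < phi (r k)) ->
  CAg m n A g phi.
Proof.
  intros hC hh. split; [exact hC|]. intro l.
  destruct (list_norm_bound l) as [B HB].
  destruct (hh B) as [q [hl [hn hd]]]. exists q. split; [exact hl|]. split.
  - intro hin. specialize (HB q hin). pose proof (r_ge B). lia.
  - rewrite hn. exact hd.
Qed.

End Blocks.

Lemma notBad_ex m n A g : ~ Bad m n A g -> forall b N, 0 < b ->
  exists q, length q = n /\ (N <= normZ q)%nat /\
    INR (normZ q) ^ n * distZv m (Aq_g n A g q) ^ m < b.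
Proof.
  intros HnB b N hb. apply NNPP. intro hno. apply HnB. exists b. split; [exact hb|].
  exists N. intros q hl hN. apply Rnot_lt_le. intro hlt. apply hno. exists q. auto.
Qed.

Lemma spike m n A g : (1 <= m)%nat -> (1 <= n)%nat -> ~ Bad m n A g ->
  forall (R0 : nat) (c e : R), 0 < c -> 0 < e ->
  exists q c', length q = n /\ (R0 < normZ q)%nat /\ distZv m (Aq_g n A g q) < c' /\
    0 < c' /\ c' <= c /\ c' ^ m * INR (normZ q) ^ n <= e.
Proof.
  intros Hm Hn HnB R0 c e hc he.
  set (K := 2 ^ m).
  assert (hK : 0 < K) by (apply pow_lt; lra).
  assert (hb : 0 < Rmin (e / (2 * K)) ((c / 2) ^ m)).
  { apply Rmin_glb_lt; [apply Rdiv_lt_0_compat; lra| apply pow_lt; lra]. }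
  destruct (notBad_ex m n A g HnB _ (S R0) hb) as [q [hl [hN hlt]]].
  set (x := INR (normZ q)) in *. set (d := distZv m (Aq_g n A g q)) in *.
  assert (hd : 0 <= d) by apply distZv_nonneg.
  assert (hx : 1 <= x). { unfold x. replace 1 with (INR 1) by reflexivity. apply le_INR; lia. }
  assert (hX : 1 <= x ^ n). { replace 1 with (1 ^ n) by apply pow1. apply pow_incr; lra. }
  assert (hdm : 0 <= d ^ m) by (apply pow_le; lra).
  assert (h1 : x ^ n * d ^ m < e / (2 * K)).
  { eapply Rlt_le_trans; [exact hlt| apply Rmin_l]. }
  assert (h2 : d ^ m < (c / 2) ^ m).
  { eapply Rle_lt_trans; [| eapply Rlt_le_trans; [exact hlt| apply Rmin_r]]. nra. }
  assert (hdc : d < c / 2) by (apply (pow_lt_inv d (c/2) m); lra).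
  set (eta := Rmin (c / 2) (Rmin 1 (e / (2 * K * x ^ n)))).
  assert (heta : 0 < eta).
  { apply Rmin_glb_lt; [lra|]. apply Rmin_glb_lt; [lra|]. apply Rdiv_lt_0_compat; [lra|].
    apply Rmult_lt_0_compat; [lra|lra]. }
  assert (heta1 : eta <= c / 2) by apply Rmin_l.
  assert (heta2 : eta <= 1) by (eapply Rle_trans; [apply Rmin_r| apply Rmin_l]).
  assert (heta3 : eta <= e / (2 * K * x ^ n)) by (eapply Rle_trans; [apply Rmin_r| apply Rmin_r]).
  assert (heta4 : eta * x ^ n <= e / (2 * K)).
  { apply Rmult_le_compat_r with (r := x ^ n) in heta3; [|lra].
    replace (e / (2 * K * x ^ n) * x ^ n) with (e / (2 * K)) in heta3 by (field; lra). exact heta3. }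
  exists q, (d + eta). change (distZv m (Aq_g n A g q)) with d. change (INR (normZ q)) with x.
  split; [exact hl|]. split; [lia|]. split; [lra|]. split; [lra|]. split; [lra|].
  pose proof (pow_sum_bound d eta m hd (Rlt_le _ _ heta)) as hs. fold K in hs.
  pose proof (pow_le_self eta m Hm (conj (Rlt_le _ _ heta) heta2)) as he1.
  apply Rle_trans with (K * (d ^ m * x ^ n + eta * x ^ n)).
  - assert (0 <= (d + eta) ^ m) by (apply pow_le; lra).
    assert (eta ^ m * x ^ n <= eta * x ^ n) by (apply Rmult_le_compat_r; lra).
    nra.
  - assert (d ^ m * x ^ n + eta * x ^ n <= e / K).
    { replace (e / K) with (e / (2 * K) + e / (2 * K)) by (field; lra). nra. }
    apply Rmult_le_compat_l with (r := K) in H; [|lra].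
    replace (K * (e / K)) with e in H by (field; lra). exact H.
Qed.

Record St := mkSt { sf : nat -> R; sR : nat; sc : R; se : R }.

Section Construct.
Variables (m n : nat) (A : nat -> nat -> R) (g : nat -> R).
Hypothesis Hm : (1 <= m)%nat.
Hypothesis Hn : (1 <= n)%nat.
Hypothesis HnB : ~ Bad m n A g.
Variable rho : (nat -> R) -> nat -> R.
Hypothesis Hrho : forall f k, 0 < rho f k.

Definition spike_prop (R0 : nat) (c e : R) (p : list Z * R) : Prop :=
  length (fst p) = n /\ (R0 < normZ (fst p))%nat /\ distZv m (Aq_g n A g (fst p)) < snd p /\
    0 < snd p /\ snd p <= c /\ snd p ^ m * INR (normZ (fst p)) ^ n <= e.

Lemma spike_ex R0 c e : exists p, (0 < c -> 0 < e -> spike_prop R0 c e p).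
Proof.
  destruct (classic (0 < c /\ 0 < e)) as [[hc he]|h].
  - destruct (spike m n A g Hm Hn HnB R0 c e hc he) as [q [c' H]].
    exists (q, c'). intros _ _. exact H.
  - exists ([], 0). intros hc he. exfalso. apply h; auto.
Qed.

Definition sp R0 c e : list Z * R :=
  proj1_sig (constructive_indefinite_description _ (spike_ex R0 c e)).

Lemma sp_spec R0 c e : 0 < c -> 0 < e -> spike_prop R0 c e (sp R0 c e).
Proof. unfold sp. destruct (constructive_indefinite_description _ _) as [p hp]. exact hp. Qed.

Definition stepS (k : nat) (s : St) : St :=
  let e1 := Rmin (se s / 2) (rho (sf s) k / 4) in
  let p := sp (sR s) (sc s) e1 in
  mkSt (fun x => if Nat.leb x (sR s) then sf s x
                 else if Nat.leb x (normZ (fst p)) then snd p else 0)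
       (normZ (fst p)) (snd p) e1.

Fixpoint st (k : nat) : St :=
  match k with O => mkSt (fun _ => 0) 0 1 1 | S k' => stepS k' (st k') end.

Definition ee1 k := Rmin (se (st k) / 2) (rho (sf (st k)) k / 4).

Lemma st_pos k : 0 < sc (st k) /\ 0 < se (st k).
Proof.
  induction k as [|k [h1 h2]]; simpl; [lra|].
  assert (he : 0 < ee1 k).
  { unfold ee1. apply Rmin_glb_lt; [lra|]. pose proof (Hrho (sf (st k)) k). lra. }
  destruct (sp_spec (sR (st k)) (sc (st k)) (ee1 k) h1 he) as [_ [_ [_ [hc _]]]].
  split; [exact hc| exact he].
Qed.

Lemma st_spec k : spike_prop (sR (st k)) (sc (st k)) (ee1 k) (sp (sR (st k)) (sc (st k)) (ee1 k)).
Proof.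
  destruct (st_pos k) as [h1 h2]. apply sp_spec; auto.
  unfold ee1. apply Rmin_glb_lt; [lra|]. pose proof (Hrho (sf (st k)) k). lra.
Qed.

Definition rr k := sR (st (S k)).
Definition cc k := sc (st (S k)).
Definition ee k := se (st (S k)).

Lemma rr_eq k : rr k = normZ (fst (sp (sR (st k)) (sc (st k)) (ee1 k))).
Proof. reflexivity. Qed.
Lemma cc_eq k : cc k = snd (sp (sR (st k)) (sc (st k)) (ee1 k)).
Proof. reflexivity. Qed.
Lemma ee_eq k : ee k = ee1 k.
Proof. reflexivity. Qed.

Lemma HHr j : (rr j < rr (S j))%nat.
Proof. rewrite (rr_eq (S j)). destruct (st_spec (S j)) as [_ [h _]]. exact h. Qed.
Lemma HHr0 : (1 <= rr 0)%nat.
Proof. rewrite (rr_eq 0). destruct (st_spec 0) as [_ [h _]]. assert (sR (st 0) = 0%nat) by reflexivity. lia. Qed.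
Lemma HHc j : 0 < cc j.
Proof. rewrite cc_eq. destruct (st_spec j) as [_ [_ [_ [h _]]]]. exact h. Qed.
Lemma HHcd j : cc (S j) <= cc j.
Proof. rewrite (cc_eq (S j)). destruct (st_spec (S j)) as [_ [_ [_ [_ [h _]]]]]. exact h. Qed.
Lemma HHe j : 2 * ee (S j) <= ee j.
Proof.
  rewrite (ee_eq (S j)). unfold ee1. pose proof (Rmin_l (se (st (S j)) / 2) (rho (sf (st (S j))) (S j) / 4)).
  change (ee j) with (se (st (S j))). lra.
Qed.
Lemma HHE j : cc j ^ m * INR (rr j) ^ n <= ee j.
Proof.
  destruct (st_spec j) as [_ [_ [_ [_ [_ h]]]]]. exact h.
Qed.
Lemma HHrho j : ee j <= rho (sf (st j)) j / 4.
Proof. rewrite ee_eq. apply Rmin_r. Qed.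
Lemma HHhits j : exists q, length q = n /\ normZ q = rr j /\ distZv m (Aq_g n A g q) < cc j.
Proof.
  exists (fst (sp (sR (st j)) (sc (st j)) (ee1 j))). rewrite cc_eq, rr_eq.
  destruct (st_spec j) as [h1 [_ [h3 _]]]. auto.
Qed.

Lemma Rprev_rr k : Rprev rr k = sR (st k).
Proof. destruct k; reflexivity. Qed.

Lemma sf_trunc k : sf (st k) = trunc rr cc k.
Proof.
  apply functional_extensionality.
  induction k as [|k IH]; intro x.
  - unfold trunc. simpl. destruct x; reflexivity.
  - change (sf (st (S k)) x) with
      (if Nat.leb x (sR (st k)) then sf (st k) x
       else if Nat.leb x (rr k) then cc k else 0).
    unfold trunc. change (Rprev rr (S k)) with (rr k).
    pose proof (HHr0). 
    assert (hp : (sR (st k) < rr k)%nat).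
    { rewrite <- Rprev_rr. destruct k; simpl; [lia| apply HHr]. }
    destruct (Nat.leb_spec x (sR (st k))) as [h|h].
    + rewrite IH. unfold trunc. rewrite Rprev_rr.
      destruct (Nat.leb_spec x (sR (st k))); [|lia].
      destruct (Nat.leb_spec x (rr k)); [reflexivity| lia].
    + destruct (Nat.leb_spec x (rr k)) as [h'|h']; [|reflexivity].
      destruct x as [|x]; [lia|]. unfold th.
      rewrite (Jf_block m n rr cc ee Hm Hn HHr HHr0 HHc HHcd HHe HHE k (S x)); [reflexivity|].
      rewrite Rprev_rr. lia.
Qed.

Lemma construct_main :
  exists r c e,
    (forall j, (r j < r (S j))%nat) /\ (1 <= r 0)%nat /\ (forall j, 0 < c j) /\
    (forall j, c (S j) <= c j) /\ (forall j, 2 * e (S j) <= e j) /\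
    (forall j, c j ^ m * INR (r j) ^ n <= e j) /\
    (forall j, e j <= rho (trunc r c j) j / 4) /\
    (forall j, exists q, length q = n /\ normZ q = r j /\ distZv m (Aq_g n A g q) < c j).
Proof.
  exists rr, cc, ee. split; [exact HHr|]. split; [exact HHr0|]. split; [exact HHc|].
  split; [exact HHcd|]. split; [exact HHe|]. split; [exact HHE|]. split.
  - intro j. rewrite <- sf_trunc. apply HHrho.
  - exact HHhits.
Qed.

End Construct.

Lemma pow_lt_strict x y k : (1 <= k)%nat -> 0 <= x -> x < y -> x ^ k < y ^ k.
Proof.
  intros hk hx hxy. destruct k; [lia|]. simpl.
  pose proof (pow_incr x y k (conj hx (Rlt_le _ _ hxy))).
  pose proof (pow_lt y k ltac:(lra)). pose proof (pow_le x k hx). nra.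
Qed.

Lemma Cset_nonneg m n f q : Cset m n f -> 0 <= f q.
Proof.
  intros [h0 [h1 _]]. destruct q; [rewrite h0; lra|]. apply h1; lia.
Qed.

Lemma ex_series_plusR (a b : nat -> R) : ex_series a -> ex_series b -> ex_series (fun k => a k + b k).
Proof. intros ha hb. exact (@ex_series_plus R_AbsRing R_NormedModule a b ha hb). Qed.

Lemma ex_series_leR (a b : nat -> R) : (forall k, Rabs (a k) <= b k) -> ex_series b -> ex_series a.
Proof. intros h hb. exact (@ex_series_le R_AbsRing R_CompleteNormedModule a b h hb). Qed.

Lemma ex_dist m n f h : Cset m n f -> Cset m n h ->
  ex_series (fun q => INR q ^ (n - 1) * Rabs (f q ^ m - h q ^ m)).
Proof.
  intros hf hh.
  apply ex_series_leR with (b := fun q => INR q ^ (n - 1) * f q ^ m + INR q ^ (n - 1) * h q ^ m).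
  - intro q. pose proof (Cset_nonneg m n f q hf). pose proof (Cset_nonneg m n h q hh).
    pose proof (pow_le (f q) m H). pose proof (pow_le (h q) m H0).
    pose proof (pow_le (INR q) (n - 1) (pos_INR q)).
    rewrite Rabs_pos_eq by (apply Rmult_le_pos; [lra| apply Rabs_pos]).
    assert (Rabs (f q ^ m - h q ^ m) <= f q ^ m + h q ^ m).
    { apply Rabs_le. lra. }
    nra.
  - apply ex_series_plusR; [apply hf| apply hh].
Qed.

Lemma dist_nonneg_terms m n f h q : 0 <= INR q ^ (n - 1) * Rabs (f q ^ m - h q ^ m).
Proof. apply Rmult_le_pos; [apply pow_le, pos_INR| apply Rabs_pos]. Qed.

Definition UN m n A g (N : nat) (psi : nat -> R) : Prop :=
  Cset m n psi /\ exists q, length q = n /\ (N <= normZ q)%nat /\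
    distZv m (Aq_g n A g q) < psi (normZ q).

Lemma UN_open m n A g N : (1 <= m)%nat -> open_C m n (UN m n A g N).
Proof.
  intros Hm. split; [intros psi [h _]; exact h|].
  intros psi [hC [q [hl [hN hd]]]].
  set (k := normZ q) in *. set (d := distZv m (Aq_g n A g q)) in *.
  assert (hd0 : 0 <= d) by apply distZv_nonneg.
  assert (hk : (1 <= k)%nat).
  { destruct k as [|k']; [|lia]. destruct hC as [h0 _]. rewrite h0 in hd. lra. }
  exists (psi k ^ m - d ^ m). split.
  - pose proof (pow_lt_strict d (psi k) m Hm hd0 hd). lra.
  - intros phi hphi hdist. split; [exact hphi|]. exists q. split; [exact hl|]. split; [exact hN|].
    fold k d.
    pose proof (term_le_series _ k (dist_nonneg_terms m n psi phi) (ex_dist m n psi phi hC hphi)) as ht.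
    unfold dist_C in hdist.
    assert (h1 : 1 <= INR k ^ (n - 1)).
    { replace 1 with (1 ^ (n - 1)) by apply pow1. apply pow_incr. split; [lra|].
      replace 1 with (INR 1) by reflexivity. apply le_INR; exact hk. }
    assert (h2 : Rabs (psi k ^ m - phi k ^ m) <= INR k ^ (n - 1) * Rabs (psi k ^ m - phi k ^ m)).
    { pose proof (Rabs_pos (psi k ^ m - phi k ^ m)). nra. }
    assert (h3 : psi k ^ m - phi k ^ m <= Rabs (psi k ^ m - phi k ^ m)) by apply Rle_abs.
    apply (pow_lt_inv d (phi k) m hd0 (Cset_nonneg m n phi k hphi)). lra.
Qed.

Lemma CAg_UN m n A g psi : CAg m n A g psi <-> forall N, UN m n A g N psi.
Proof.
  split.
  - intros [hC H] N. split; [exact hC|].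
    destruct (H (vecs n N)) as [q [hl [hnin hd]]]. exists q. split; [exact hl|]. split; [|exact hd].
    destruct (Nat.le_gt_cases (normZ q) N) as [h|h]; [|lia].
    exfalso. apply hnin. apply in_vecs_norm; auto.
  - intros H. split; [apply (H 0%nat)|]. intro l.
    destruct (list_norm_bound l) as [B HB].
    destruct (H (S B)) as [_ [q [hl [hN hd]]]]. exists q. split; [exact hl|]. split; [|exact hd].
    intro hin. specialize (HB q hin). lia.
Qed.

Theorem theorem1p7 (m n : nat) (A : nat -> nat -> R) (g : nat -> R) :
  (1 <= m)%nat -> (1 <= n)%nat ->
  (forall i j, (i < m)%nat -> (j < n)%nat -> 0 <= A i j < 1) ->
  (forall i, (i < m)%nat -> 0 <= g i < 1) ->
  ~ Bad m n A g ->
  (G_delta_C m n (CAg m n A g) /\ dense_C m n (CAg m n A g)) /\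
  ~ F_sigma_C m n (CAg m n A g).
Proof.
  intros Hm Hn _ _ HnB. split; [split|].
  -
    exists (UN m n A g). split.
    + intro N. apply UN_open; exact Hm.
    + intro psi. apply CAg_UN.
  -
    intros psi hpsi eps heps.
    destruct (construct_main m n A g Hm Hn HnB (fun _ _ => eps) (fun _ _ => heps))
      as [r [c [e [Hr [Hr0 [Hc [Hcd [He [HE [Hrho Hhits]]]]]]]]]].
    set (th0 := th r c).
    assert (Cth : Cset m n th0) by exact (Cset_th m n r c e Hm Hn Hr Hr0 Hc Hcd He HE).
    destruct (th_series m n r c e Hm Hn Hr Hr0 Hc Hcd He HE) as [exth serth].
    set (phi := fun q => Rmax (psi q) (th0 q)).
    assert (hmax : forall a b, 0 <= a -> 0 <= b -> Rmax a b ^ m <= a ^ m + b ^ m).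
    { intros a b ha hb. pose proof (pow_le a m ha). pose proof (pow_le b m hb).
      unfold Rmax. destruct (Rle_dec a b); lra. }
    assert (Cphi : Cset m n phi).
    { split; [unfold phi; rewrite (proj1 hpsi), (proj1 Cth); unfold Rmax; destruct (Rle_dec 0 0); lra|].
      split; [intros q _; unfold phi; pose proof (Cset_nonneg m n psi q hpsi); eapply Rle_trans; [exact H| apply Rmax_l]|].
      split.
      - intros p q h1 h2. unfold phi. apply Rmax_lub.
        + apply Rle_trans with (psi p); [apply (proj1 (proj2 (proj2 hpsi))); auto| apply Rmax_l].
        + apply Rle_trans with (th0 p); [apply (proj1 (proj2 (proj2 Cth))); auto| apply Rmax_r].
      - apply ex_series_leR with (b := fun q => INR q ^ (n - 1) * psi q ^ m + INR q ^ (n - 1) * th0 q ^ m).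
        + intro q. pose proof (Cset_nonneg m n psi q hpsi). pose proof (Cset_nonneg m n th0 q Cth).
          pose proof (pow_le (INR q) (n - 1) (pos_INR q)) as hp.
          unfold phi. rewrite Rabs_pos_eq.
          * pose proof (hmax _ _ H H0). nra.
          * apply Rmult_le_pos; [lra| apply pow_le]. eapply Rle_trans; [exact H| apply Rmax_l].
        + apply ex_series_plusR; [apply hpsi| exact exth]. }
    exists phi. split.
    + apply (hits_CAg m n r c e Hm Hn Hr Hr0 Hc Hcd He HE A g phi Cphi).
      intro k. destruct (Hhits k) as [q [hl [hn hd]]]. exists q. split; [exact hl|]. split; [exact hn|].
      unfold phi. eapply Rlt_le_trans; [|apply Rmax_r]. unfold th0.
      rewrite (th_at_r m n r c e Hm Hn Hr Hr0 Hc Hcd He HE). exact hd.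
    + unfold dist_C. apply Rle_lt_trans with (Series (term m n th0)).
      * apply Series_le; [|exact exth]. intro q. split; [apply dist_nonneg_terms|].
        unfold term, phi. apply Rmult_le_compat_l; [apply pow_le, pos_INR|].
        pose proof (Cset_nonneg m n psi q hpsi) as h1. pose proof (Cset_nonneg m n th0 q Cth) as h2.
        pose proof (pow_le (psi q) m h1). pose proof (pow_le (th0 q) m h2).
        unfold Rmax. destruct (Rle_dec (psi q) (th0 q)) as [h|h].
        -- pose proof (pow_incr _ _ m (conj h1 h)). rewrite Rabs_left1 by lra. lra.
        -- rewrite Rminus_diag, Rabs_R0. lra.
      * specialize (Hrho 0%nat). pose proof (He 0%nat).
        pose proof (HE 1%nat). pose proof (Hc 1%nat).
        assert (0 <= e 1%nat).
        { eapply Rle_trans; [|exact H0]. apply Rmult_le_pos; apply pow_le; [lra| apply pos_INR]. }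
        unfold th0. lra.
  -
    intros [F [HF HFeq]].
    assert (Hex : forall f k, exists rho, 0 < rho /\
      (Cset m n f -> ~ F k f -> forall phi, Cset m n phi -> dist_C m n f phi < rho -> ~ F k phi)).
    { intros f k. destruct (classic (Cset m n f /\ ~ F k f)) as [[hC hF]|hno].
      - destruct (HF k) as [_ [_ Hop]]. destruct (Hop f (conj hC hF)) as [eps [heps Hb]].
        exists eps. split; [exact heps|]. intros _ _ phi hphi hd. exact (proj2 (Hb phi hphi hd)).
      - exists 1. split; [lra|]. intros hC hF. exfalso. apply hno; auto. }
    set (rho := fun f k => proj1_sig (constructive_indefinite_description _ (Hex f k))).
    assert (Hrho : forall f k, 0 < rho f k /\
      (Cset m n f -> ~ F k f -> forall phi, Cset m n phi -> dist_C m n f phi < rho f k -> ~ F k phi)).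
    { intros f k. unfold rho. destruct (constructive_indefinite_description _ _) as [x hx]. exact hx. }
    destruct (construct_main m n A g Hm Hn HnB rho (fun f k => proj1 (Hrho f k)))
      as [r [c [e [Hr [Hr0 [Hc [Hcd [He [HE [Hre Hhits]]]]]]]]]].
    assert (Cth : Cset m n (th r c)) by exact (Cset_th m n r c e Hm Hn Hr Hr0 Hc Hcd He HE).
    assert (CA : CAg m n A g (th r c)).
    { apply (hits_CAg m n r c e Hm Hn Hr Hr0 Hc Hcd He HE A g _ Cth).
      intro k. destruct (Hhits k) as [q [hl [hn hd]]]. exists q. split; [exact hl|]. split; [exact hn|].
      rewrite (th_at_r m n r c e Hm Hn Hr Hr0 Hc Hcd He HE). exact hd. }
    destruct (proj1 (HFeq _) CA) as [k hk].
    set (f := trunc r c k).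
    assert (Cf : Cset m n f) by exact (Cset_trunc m n r c e Hm Hn Hr Hr0 Hc Hcd He HE k).
    assert (nF : ~ F k f).
    { intro hF. apply (trunc_not_CAg m n r c e Hm Hn Hr Hr0 Hc Hcd He HE A g k).
      apply HFeq. exists k. exact hF. }
    destruct (Hrho f k) as [hpos Hball].
    apply (Hball Cf nF (th r c) Cth); [|exact hk].
    destruct (dist_trunc m n r c e Hm Hn Hr Hr0 Hc Hcd He HE k) as [_ hd].
    specialize (Hre k). fold f in Hre, hd. lra.
Qed.
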